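(* Let $p\ge2$, and let $(V_i)_{i\ge1}$ and the determinants $\mathcal H^{p,m}_n$ be as in the context, with the convention $\mathcal H^{p,m}_{-1}=1$. For $m\in\{0,\ldots,p-1\}$ and $n\in\mathbb N$, \[ V_{pn+m} = \begin{cases} \dfrac{\mathcal H^{p,m}_n\, \mathcal H^{p,m-1}_{n-1}}{\mathcal H^{p,m}_{n-1}\, \mathcal H^{p,m-1}_{n}} & \text{if } m\ge1,\\[2ex] \dfrac{\mathcal H^{p,0}_n\, \mathcal H^{p,p-1}_{n-2}}{\mathcal H^{p,0}_{n-1}\, \mathcal H^{p,p-1}_{n-1}} & \text{if } m=0 \text{ and } n\ge1. \end{cases} \]
   Context: Fix an integer $p\ge 2$. A $p$-constellation is a planar map (proper embedding of a connected graph in the sphere, up to orientation-preserving homeomorphism) whose faces are colored black or white so that adjacent faces have opposite colors, every black face has degree $p$ and every white face has degree a multiple of $p$. Edges are oriented with the white face on their right. Rooted means one edge (root edge) is distinguished; pointed means a vertex (pointed vertex) is distinguished. In a pointed constellation a vertex has type $j$ if $j$ is the minimal length of an oriented path from it to the pointed vertex; an edge has type $j\to j'$ if its origin and endpoint have types $j,j'$. Let $(x_k)_{k\ge1}$ be formal variables, a white face of degree $kp$ having weight $x_k$, and a constellation weighted by the product of its white face weights. For $i\ge1$, $V_i$ is $1$ plus the generating function of pointed rooted $p$-constellations whose root edge is of type $j\to j-1$ for some $j\le i$. A $p$-path is a lattice path in $\mathbb Z\times\mathbb N$ with rises $(1,p-1)$ and falls $(1,-1)$; its weight is the product over its falls of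 $V_i$, $i$ being the starting height of the fall. For $n,r\ge0$, $F_n^{(r)}$ is the sum of the weights of all $p$-paths from $(-r,r)$ to $(np,0)$. For $k\in\mathbb N$ let $q_k=\lfloor k/(p-1)\rfloor$ and $r_k=k-(p-1)q_k$. For $m\in\{0,\ldots,p-1\}$ and $n\in\mathbb N$, $\mathcal H^{p,m}_n:=\det_{0\le i,j\le n}F^{(r_{i+m})}_{q_{i+m}+j}$. *)

(* Defs.v *)
From HB Require Import structures.
From mathcomp Require Import all_boot all_order all_algebra all_fingroup.
From mathcomp Require Import mpoly.

Set Implicit Arguments.
Unset Strict Implicit.
Unset Printing Implicit Defensive.

Import GRing.Theory.

(* p-constellations, encoded combinatorially on the edge set 'I_N.           *)
(* b : next edge (in orientation order) around the black face of an edge,   *)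
(* w : next edge (in orientation order) around the white face of an edge.   *)
(* Edges are oriented with the white face on their right, so the endpoint   *)
(* of e is the origin of b e (and of w e).  The vertex rotation acting on   *)
(* outgoing edges is  x |-> w (b^-1 x), whose cycles are the vertices.      *)

Definition vertex_perm N (b w : {perm 'I_N}) : {perm 'I_N} := (b^-1 * w)%g.

(* connected, black faces of degree p, white faces of degree multiple of p, *)
(* planar (Euler: #vertices + #faces = #edges + 2).                         *)
Definition is_constellation (p N : nat) (b w : {perm 'I_N}) : bool :=
  [&& [forall x, #|porbit b x| == p],
      [forall x, p %| #|porbit w x| ],
      [forall x, forall y,
          connect (fun u v : 'I_N => (v == b u) || (v == w u)) x y] &
      (#|porbits (vertex_perm b w)| + #|porbits b| + #|porbits w| == N + 2)].

(* reach L x : the origin of edge x is joined to the pointed vertex v       *)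
(* (a vertex = set of its outgoing edges) by an oriented path of length <= L *)
Fixpoint reach N (b w : {perm 'I_N}) (v : {set 'I_N}) (L : nat) (x : 'I_N)
  : bool :=
  if L is L'.+1 then
    reach b w v L' x
    || [exists e in porbit (vertex_perm b w) x, reach b w v L' (b e)]
  else x \in v.

Definition has_type N (b w : {perm 'I_N}) (v : {set 'I_N}) (j : nat)
  (x : 'I_N) : bool :=
  reach b w v j x && ((j == 0) || ~~ reach b w v j.-1 x).

Definition root_ok (i N : nat) (b w : {perm 'I_N.+1}) (v : {set 'I_N.+1})
  : bool :=
  [exists j : 'I_i.+1, [&& 0 < (j : nat), has_type b w v j ord0
                          & has_type b w v j.-1 (b ord0)]].

Local Open Scope ring_scope.

(* Formal variables: x_k is the variable 'X_k of {mpoly rat[M.+1]}          *)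
(* (variable 0 unused); weight of a constellation = prod of x_k over white  *)
(* faces of degree kp.                                                       *)
Definition map_weight (p M N : nat) (w : {perm 'I_N}) : {mpoly rat[M.+1]} :=
  \prod_(C in porbits w) 'X_(inord (#|C| %/ p)).

(* Truncation at M of V_i: 1 + the generating function of pointed rooted    *)
(* p-constellations with at most M*p edges (i.e. monomial weight <= M).     *)
(* Rooted maps up to isomorphism with N.+1 edges are counted as labelled    *)
(* structures on 'I_N.+1 with root edge ord0, divided by N`! (rooted maps   *)
(* have no non-trivial automorphism).                                        *)
Definition Vtrunc (p M i : nat) : {mpoly rat[M.+1]} :=
  1 + \sum_(N < M * p)
        ((N`!)%:R^-1 : rat) *:
        \sum_(b : {perm 'I_N.+1}) \sum_(w : {perm 'I_N.+1})
           \sum_(v in porbits (vertex_perm b w)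
                 | is_constellation p b w && root_ok i b w v)
              map_weight p M w.

Definition pstep (p : nat) (s : bool) : int := if s then (p.-1)%:Z else -1.

Definition heights (p r : nat) (s : seq bool) : seq int :=
  scanl (fun h b => h + pstep p b) (r%:Z) s.

Definition ppath_ok (p r : nat) (s : seq bool) : bool :=
  all (fun h => 0 <= h) (heights p r s) && (last (r%:Z) (heights p r s) == 0).

Definition ppath_weight (R : comRingType) (p : nat) (V : nat -> R) (r : nat)
  (s : seq bool) : R :=
  \prod_(hb <- zip (belast (r%:Z) (heights p r s)) s | ~~ hb.2) V `|hb.1|%N.

(* F_n^(r): paths from (-r, r) to (np, 0), i.e. with n*p + r steps *)
Definition Fpath (R : comRingType) (p : nat) (V : nat -> R) (n r : nat) : R :=
  \sum_(s : (n * p + r).-tuple bool | ppath_ok p r s) ppath_weight p V r s.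

Definition qk (p k : nat) : nat := k %/ p.-1.
Definition rk (p k : nat) : nat := k - p.-1 * qk p k.

Definition Hdet (R : comRingType) (p : nat) (V : nat -> R) (m n : nat) : R :=
  \det (\matrix_(i < n.+1, j < n.+1)
          Fpath p V (qk p (i + m) + j) (rk p (i + m))).

(* Hs V m k = H^{p,m}_{k-1}, with the convention H^{p,m}_{-1} = 1 *)
Definition Hs (R : comRingType) (p : nat) (V : nat -> R) (m k : nat) : R :=
  if k is k'.+1 then Hdet p V m k' else 1.

(* Formal power series in x_1, x_2, ... given by coherent truncations.       *)
(* Equality of series: equality of all coefficients of monomials of weight  *)
(* <= M in the M-th truncation, for every M.                                  *)

Definition mweight M (mm : 'X_{1..M.+1}) : nat := (\sum_(i < M.+1) i * mm i)%N.

Definition series_eq (A B : forall M : nat, {mpoly rat[M.+1]}) : Prop :=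
  forall M (mm : 'X_{1..M.+1}), (mweight mm <= M)%N -> (A M)@_mm = (B M)@_mm.

(* invertible formal power series (over Q): nonzero constant term *)
Definition series_unit (A : forall M : nat, {mpoly rat[M.+1]}) : Prop :=
  forall M, (A M)@_0%MM != 0.

(* Main.v *)
Require Import Defs.
From mathcomp Require Import all_boot all_order all_algebra all_fingroup.
From mathcomp Require Import mpoly.
From mathcomp Require Import zify ring.
Set Implicit Arguments. Unset Strict Implicit. Unset Printing Implicit Defensive.
Import GRing.Theory Num.Theory.
Local Open Scope ring_scope.

Section Paths.
Variables (R : comRingType) (p : nat) (V : nat -> R).

Fixpoint Pw (h : int) (s : seq bool) (g : int) : R :=
  if 0 <= h then
    match s with
    | [::] => (h == g)%:R
    | b :: s' => (if b then 1 else V `|h|%N) * Pw (h + pstep p b) s' g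
    end
  else 0.

Fixpoint hend (h : int) (s : seq bool) : int :=
  if s is b :: s' then hend (h + pstep p b) s' else h.

Lemma Pw_link (h : int) (s : seq bool) (g : int) : 0 <= h ->
  (all (fun h => 0 <= h) (scanl (fun h b => h + pstep p b) h s)
    && (last h (scanl (fun h b => h + pstep p b) h s) == g))%:R *
  \prod_(hb <- zip (belast h (scanl (fun h b => h + pstep p b) h s)) s | ~~ hb.2)
     V `|hb.1|%N = Pw h s g.
Proof.
elim: s h => [|b s IH] h h0 /=; first by rewrite h0 big_nil mulr1.
rewrite h0 big_cons /=.
case: (boolP (0 <= h + pstep p b)) => hp /=.
  rewrite -(IH _ hp); case: b {hp} => /=; ring.
by case: s {IH} => [|b' s] /=; rewrite (negbTE hp) !mul0r mulr0.
Qed.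

Lemma hendE h s : hend h s =
  h + (count id s)%:Z * (p.-1)%:Z - (size s - count id s)%N%:Z.
Proof.
elim: s h => [|b s IH] h /=; first by rewrite subnn; ring.
rewrite IH; case: b => /=.
  rewrite subSS; ring.
rewrite add0n subSn ?count_size // intS; ring.
Qed.

Lemma Pw_end h s g : Pw h s g != 0 -> g = hend h s.
Proof.
elim: s h => [|b s IH] h /=; case: (0 <= h); rewrite ?eqxx //.
  by have [->|ne] := eqVneq h g; rewrite ?eqxx // (negbTE ne) eqxx.
by move=> H; apply: IH; apply: contraNneq H => ->; rewrite mulr0.
Qed.

Lemma Pw_ge0 h s g : Pw h s g != 0 -> 0 <= g.
Proof.
elim: s h => [|b s IH] h /=; case: (boolP (0 <= h)); rewrite ?eqxx //.
  by move=> h0; have [<-|ne] := eqVneq h g; rewrite ?eqxx // (negbTE ne) eqxx.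
by move=> _ H; apply: (IH (h + pstep p b)); apply: contraNneq H => ->; rewrite mulr0.
Qed.

Lemma Pw_cat h s1 s2 g :
  Pw h (s1 ++ s2) g = Pw h s1 (hend h s1) * Pw (hend h s1) s2 g.
Proof.
elim: s1 h => [|b s IH] h /=.
  by case: s2 => [|? ?] /=; case: (0 <= h); rewrite ?eqxx ?mul1r ?mul0r.
by case: (0 <= h); rewrite ?mul0r // IH mulrA.
Qed.

Lemma Pw_rises h n g : Pw h (nseq n true) g =
  ((0 <= h) && (g == h + (n * p.-1)%N%:Z))%:R.
Proof.
elim: n h => [|n IH] h /=.
  by case: (0 <= h); rewrite //= mul0n addr0 eq_sym.
case: (boolP (0 <= h)) => h0 //=.
rewrite mul1r IH /pstep ler_wpDr // /= mulSn PoszD addrA.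
by rewrite [_ + (p.-1)%:Z]addrC.
Qed.

Lemma Pw_falls n : Pw n%:Z (nseq n false) 0 = \prod_(t < n) V t.+1.
Proof.
elim: n => [|n IH] /=; first by rewrite big_ord0.
rewrite big_ord_recr /= mulrC /pstep.
have -> : n.+1%:Z + -1 = n%:Z by rewrite intS; ring.
by rewrite IH.
Qed.

End Paths.
Lemma sum_tuple_cons (R : comRingType) (T : finType) n (F : seq T -> R) :
  \sum_(s : n.+1.-tuple T) F s = \sum_(x : T) \sum_(s : n.-tuple T) F (x :: s).
Proof.
rewrite pair_big /=.
rewrite (reindex (fun xs : T * n.-tuple T => [tuple of xs.1 :: xs.2])) /=.
  by apply: eq_bigr => -[x s] _.
exists (fun t : n.+1.-tuple T => (thead t, [tuple of behead t])).
  by move=> [x s] _ /=; rewrite theadE; congr pair; apply: val_inj.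
by move=> t _ /=; rewrite [in RHS](tuple_eta t).
Qed.

Lemma sum_tuple0 (R : comRingType) (T : finType) (F : seq T -> R) :
  \sum_(s : 0.-tuple T) F s = F [::].
Proof.
rewrite (big_pred1 [tuple]) // => t /=; apply/esym/eqP; exact: tuple0.
Qed.

Lemma sum_tuple_cat (R : comRingType) (T : finType) n1 n2 (F : seq T -> R) :
  \sum_(s : (n1 + n2).-tuple T) F s =
  \sum_(s1 : n1.-tuple T) \sum_(s2 : n2.-tuple T) F (s1 ++ s2).
Proof.
elim: n1 F => [|n1 IH] F.
  rewrite (sum_tuple0 (fun s1 => \sum_(s2 : n2.-tuple T) F (s1 ++ s2))) /=. exact: eq_bigr.
rewrite [LHS](@sum_tuple_cons R T (n1 + n2) F) (@sum_tuple_cons R T n1 (fun s1 => \sum_(s2 : n2.-tuple T) F (s1 ++ s2))); apply: eq_bigr => x _.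
by rewrite (IH (fun s => F (x :: s))).
Qed.
Lemma arith1 (p m i q r c L1 : nat) (g : int) :
  (1 < p)%N -> (m < p)%N -> (i + m = q * p.-1 + r)%N -> L1 = (i + m + q - m)%N ->
  (c <= L1)%N ->
  g = r%:Z + c%:Z * (p.-1)%:Z - (L1 - c)%N%:Z -> 0 <= g ->
  (q <= c)%N /\ g = ((c - q) * p + m)%N%:Z.
Proof.
case: p => [|P] //= _ hm E1 E2 hc Eg g0.
have E : g = (c%:Z - q%:Z) * P.+1%:Z + m%:Z by nia.
have qc : (q <= c)%N.
  case: (leqP q c) => // cq.
  have : (c%:Z - q%:Z) * P.+1%:Z <= - P.+1%:Z by nia.
  lia.
split => //; nia.
Qed.

Lemma arith2 (p m h j c : nat) : (0 < p)%N -> (c <= j * p + m)%N ->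
  0 = (h * p + m)%N%:Z + c%:Z * (p.-1)%:Z - (j * p + m - c)%N%:Z ->
  (h + c = j)%N.
Proof. case: p => [|P] //= _ hc E. nia. Qed.

Lemma rk_eq p k : k = (qk p k * p.-1 + rk p k)%N.
Proof. rewrite /rk /qk; have := divn_eq k p.-1; lia. Qed.

Lemma Pw_neq (R : comRingType) p (V : nat -> R) h s g :
  g != hend p h s -> Pw p V h s g = 0.
Proof. by move=> ne; apply/eqP; apply: contraNT ne => /Pw_end ->. Qed.

Lemma Fpath_Pw (R : comRingType) p (V : nat -> R) n r :
  Fpath p V n r = \sum_(s : (n * p + r).-tuple bool) Pw p V r%:Z s 0.
Proof.
rewrite /Fpath big_mkcond; apply: eq_bigr => s _.
rewrite -Pw_link // /ppath_ok /ppath_weight /heights.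
by case: ifP => _; rewrite ?mul1r ?mul0r.
Qed.

Section Mat.
Variables (R : comRingType) (p : nat) (V : nat -> R) (m n : nat).
Hypotheses (hp : (1 < p)%N) (hm : (m < p)%N).

Let qq (i : nat) := qk p (i + m).
Let rr (i : nat) := rk p (i + m).
Let L1 (i : nat) := (i + m + qq i - m)%N.

Definition Lmat : 'M[R]_n.+1 := \matrix_(i, h)
  \sum_(s : (L1 i).-tuple bool) Pw p V (rr i)%:Z s (h * p + m)%N%:Z.
Definition Umat : 'M[R]_n.+1 := \matrix_(h, j)
  \sum_(s : (j * p + m).-tuple bool) Pw p V (h * p + m)%N%:Z s 0.

Lemma keyL (i : nat) (s : seq bool) g : size s = L1 i ->
  Pw p V (rr i)%:Z s g != 0 ->
  (qq i <= count id s)%N /\ g = ((count id s - qq i) * p + m)%N%:Z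
  /\ (count id s - qq i <= i)%N.
Proof.
move=> hs nz; have g0 := Pw_ge0 nz; have Eg := Pw_end nz.
rewrite hendE hs in Eg.
have hc : (count id s <= L1 i)%N by rewrite -hs count_size.
have [] := arith1 hp hm (rk_eq p (i + m)) (erefl _) hc Eg g0.
by move=> h1 h2; do !split => //; rewrite /L1 in hc; lia.
Qed.

Lemma keyU (h j : nat) (s : seq bool) : size s = (j * p + m)%N ->
  Pw p V (h * p + m)%N%:Z s 0 != 0 -> (h + count id s = j)%N.
Proof.
move=> hs nz; have Eg := Pw_end nz; rewrite hendE hs in Eg.
apply: (arith2 (m := m)) Eg; first lia.
by rewrite -hs count_size.
Qed.

Lemma Lmat_up (i h : 'I_n.+1) : (i < h)%N -> Lmat i h = 0.
Proof.
move=> ih; rewrite mxE big1 // => s _.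
apply/eqP; apply: contraT => nz.
have [_ [E le]] := keyL (size_tuple s) nz.
have : (h * p + m = (count id s - qq i) * p + m)%N by lia.
move/addIn/eqP; rewrite eqn_pmul2r; last lia.
move/eqP => Eh; lia.
Qed.

Lemma count_all_true (s : seq bool) : count id s = size s -> s = nseq (size s) true.
Proof.
move=> E; apply/all_pred1P; have : all id s by rewrite all_count E.
by apply: sub_all => b /=; case: b.
Qed.

Lemma count_all_false (s : seq bool) : count id s = 0%N -> s = nseq (size s) false.
Proof.
move=> E; apply/all_pred1P; have : ~~ has id s by rewrite has_count E.
by rewrite -all_predC; apply: sub_all => b /=; case: b.
Qed.

Lemma Lmat_diag (i : 'I_n.+1) : Lmat i i = 1.
Proof.
rewrite mxE (bigD1 (nseq_tuple (L1 i) true)) //= big1 ?addr0.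
  rewrite Pw_rises /=.
  have := rk_eq p (i + m); rewrite -/(qq i) -/(rr i) => E.
  rewrite (_ : (_ == _) = true) //; apply/eqP.
  rewrite /L1; case: p hp E => [|P] //= _ E; nia.
move=> s ns; apply/eqP; apply: contraT => nz.
have [h1 [E le]] := keyL (size_tuple s) nz.
have : (i * p + m = (count id s - qq i) * p + m)%N by lia.
move/addIn/eqP; rewrite eqn_pmul2r; last lia.
move/eqP => Eh.
have : count id s = size s by rewrite size_tuple /L1; move: Eh h1; move: (qq i) (count id s) => a b; lia.
move/count_all_true; rewrite size_tuple => Es.
by move: ns; rewrite (_ : s = nseq_tuple (L1 i) true) ?eqxx //; apply: val_inj.
Qed.

Lemma Umat_low (h j : 'I_n.+1) : (j < h)%N -> Umat h j = 0.
Proof.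
move=> jh; rewrite mxE big1 // => s _.
apply/eqP; apply: contraT => nz.
have := keyU (size_tuple s) nz; lia.
Qed.

Lemma Umat_diag (j : 'I_n.+1) : Umat j j = \prod_(t < j * p + m) V t.+1.
Proof.
rewrite mxE (bigD1 (nseq_tuple (j * p + m) false)) //= big1 ?addr0.
  by rewrite Pw_falls.
move=> s ns; apply/eqP; apply: contraT => nz.
have := keyU (size_tuple s) nz => E.
have : count id s = 0%N by lia.
move/count_all_false; rewrite size_tuple => Es.
by move: ns; rewrite (_ : s = nseq_tuple (j * p + m) false) ?eqxx //; apply: val_inj.
Qed.

Lemma term (i : 'I_n.+1) (s1 s2 : seq bool) : size s1 = L1 i ->
  \sum_(h < n.+1) Pw p V (rr i)%:Z s1 (h * p + m)%N%:Z * Pw p V (h * p + m)%N%:Z s2 0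
  = Pw p V (rr i)%:Z s1 (hend p (rr i)%:Z s1) * Pw p V (hend p (rr i)%:Z s1) s2 0.
Proof.
move=> hs.
have [Z|nz] := eqVneq (Pw p V (rr i)%:Z s1 (hend p (rr i)%:Z s1)) 0.
  rewrite Z mul0r big1 // => h _.
  have [->|ne] := eqVneq ((h * p + m)%N%:Z) (hend p (rr i)%:Z s1).
    by rewrite Z mul0r.
  by rewrite Pw_neq // mul0r.
have [h1 [E le]] := keyL hs nz.
have hlt : (count id s1 - qq i < n.+1)%N by have := ltn_ord i; lia.
rewrite (bigD1 (Ordinal hlt)) //= -E big1 ?addr0 // => h ne.
rewrite Pw_neq ?mul0r //; rewrite E; apply/eqP => /eqP.
rewrite eqz_nat eqn_add2r eqn_pmul2r; last lia.
by move=> /eqP Eh; move: ne; rewrite -val_eqE /= Eh eqxx.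
Qed.

Lemma Hmat_eq : \matrix_(i < n.+1, j < n.+1)
    Fpath p V (qk p (i + m) + j) (rk p (i + m)) = Lmat *m Umat.
Proof.
apply/matrixP => i j; rewrite !mxE Fpath_Pw.
have hlen : ((qk p (i + m) + j) * p + rk p (i + m) = L1 i + (j * p + m))%N.
  have := rk_eq p (i + m); rewrite /L1 /qq.
  case: p hp => [|P] //= _ E; nia.
rewrite hlen (sum_tuple_cat _ _ (fun s => Pw p V (rk p (i + m))%:Z s 0)).
transitivity (\sum_(s1 : (L1 i).-tuple bool) \sum_(s2 : (j * p + m).-tuple bool)
   \sum_(h < n.+1) Pw p V (rr i)%:Z s1 (h * p + m)%N%:Z * Pw p V (h * p + m)%N%:Z s2 0).
  apply: eq_bigr => s1 _; apply: eq_bigr => s2 _.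
  by rewrite term ?size_tuple // Pw_cat.
under eq_bigr => s1 _ do rewrite exchange_big /=.
rewrite exchange_big /=.
apply: eq_bigr => h _; rewrite !mxE big_distrl /=.
apply: eq_bigr => s1 _; rewrite big_distrr /=.
by apply: eq_bigr.
Qed.

Lemma Hdet_prod : Hdet p V m n = \prod_(j < n.+1) \prod_(t < j * p + m) V t.+1.
Proof.
rewrite /Hdet Hmat_eq det_mulmx det_trig; last first.
  by apply/is_trig_mxP => i h; exact: Lmat_up.
rewrite big1 ?mul1r; last by move=> i _; exact: Lmat_diag.
rewrite -det_tr det_trig; last first.
  by apply/is_trig_mxP => i j ij; rewrite mxE; exact: Umat_low.
by apply: eq_bigr => j _; rewrite mxE Umat_diag.
Qed.
End Mat.

Lemma Hs_prod (R : comRingType) p (V : nat -> R) m k : (1 < p)%N -> (m < p)%N ->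
  Hs p V m k = \prod_(j < k) \prod_(t < j * p + m) V t.+1.
Proof.
move=> hp hm; case: k => [|k] /=; first by rewrite big_ord0.
exact: Hdet_prod.
Qed.

Lemma mw_coef0 p M N (w : {perm 'I_N.+1}) : (map_weight p M w)@_0 = 0.
Proof.
rewrite /map_weight rmorph_prod (bigD1 (porbit w ord0)) /=; last exact: imset_f.
by rewrite mcoeffX mnm1_eq0 mul0r.
Qed.

Lemma Vtrunc_coef0 p M i : (Vtrunc p M i)@_0 = 1.
Proof.
rewrite /Vtrunc mcoeffD mcoeff1 eqxx raddf_sum big1 ?addr0 // => N _.
rewrite /= mcoeffZ raddf_sum big1 ?mulr0 // => b _.
rewrite /= raddf_sum big1 // => w _; rewrite /= raddf_sum big1 // => v _.
exact: mw_coef0.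
Qed.

Lemma Hs_coef0 p M m k : (1 < p)%N -> (m < p)%N ->
  (Hs p (Vtrunc p M) m k)@_0 = 1.
Proof.
move=> hp hm; rewrite Hs_prod // rmorph_prod big1 // => j _.
by rewrite rmorph_prod big1 // => t _; exact: Vtrunc_coef0.
Qed.

Lemma Hs_unit p m k : (1 < p)%N -> (m < p)%N ->
  series_unit (fun M => Hs p (Vtrunc p M) m k).
Proof. by move=> hp hm M; rewrite Hs_coef0 // oner_neq0. Qed.

Theorem corollary1 (p m n : nat) : (2 <= p)%N -> (m < p)%N ->
  ((0 < m)%N ->
     series_unit (fun M => Hs p (Vtrunc p M) m n)
     /\ series_unit (fun M => Hs p (Vtrunc p M) m.-1 n.+1)
     /\ series_eq
          (fun M => Vtrunc p M (p * n + m)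
                    * Hs p (Vtrunc p M) m n * Hs p (Vtrunc p M) m.-1 n.+1)
          (fun M => Hs p (Vtrunc p M) m n.+1 * Hs p (Vtrunc p M) m.-1 n))
  /\
  (m = 0%N -> (0 < n)%N ->
     series_unit (fun M => Hs p (Vtrunc p M) 0 n)
     /\ series_unit (fun M => Hs p (Vtrunc p M) p.-1 n)
     /\ series_eq
          (fun M => Vtrunc p M (p * n)
                    * Hs p (Vtrunc p M) 0 n * Hs p (Vtrunc p M) p.-1 n)
          (fun M => Hs p (Vtrunc p M) 0 n.+1 * Hs p (Vtrunc p M) p.-1 n.-1)).
Proof.
move=> hp hm; split.
  case: m hm => [|m'] // hm _.
  have hm' : (m' < p)%N by lia.
  do !split; try (apply: Hs_unit; lia).
  move=> M mm _; congr mcoeff.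
  set V := Vtrunc p M.
  rewrite !Hs_prod // !big_ord_recr /=.
  rewrite (_ : (n * p + m'.+1)%N = (n * p + m').+1); last by lia.
  rewrite big_ord_recr /= (mulnC p n) -addnS; ring.
move=> _ n0.
have hp1 : (p.-1 < p)%N by lia.
do !split; try (apply: Hs_unit; lia).
move=> M mm _; congr mcoeff.
set V := Vtrunc p M.
case: n n0 => [|n'] // _.
have hp0 : (0 < p)%N by lia.
rewrite !Hs_prod // [in RHS]big_ord_recr [X in _ * X = _]big_ord_recr /=.
have E : (n'.+1 * p + 0)%N = (n' * p + p.-1).+1 by lia.
have E2 : (p * n'.+1)%N = (n' * p + p.-1).+1 by lia.
rewrite E E2 [\prod_(t < (n' * p + p.-1).+1) _]big_ord_recr /=; ring.
Qed.
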